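(* Let $A,B\in\mathbb{S}^n$, $a,b\in\mathbb{R}^n$, $a_0,b_0\in\mathbb{R}$, $C\in\mathbb{R}^{m\times n}$, $d\in\mathbb{R}^m$, and suppose $\{x\in\mathbb{R}^n_+\mid Cx=d\}$ is nonempty and bounded and $q(x)=x^\top Ax+a^\top x+a_0>0$ on it. Then the optimal value of $\min\bigl\{\frac{x^\top Bx+b^\top x+b_0}{x^\top Ax+a^\top x+a_0}\bigm| x\ge0,\ Cx=d\bigr\}$ equals the optimal value of \[ \min\ b_0\rho+b^\top y+\langle B,Y\rangle\ \text{ s.t. }\ \begin{pmatrix}\rho&y^\top\\ y&Y\end{pmatrix}\in\mathcal{CP}_{n+1},\ \langle A,Y\rangle+\langle a,y\rangle+a_0\rho=1,\ \operatorname{Tr}\bigl(CYC^\top-Cyd^\top-dy^\top C^\top+\rho dd^\top\bigr)=0. \]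
   Context: $\mathcal{CP}_d$ is the cone of $d\times d$ completely positive matrices, i.e. matrices of the form $\sum_{i=1}^kh_ih_i^\top$ with $h_i\in\mathbb{R}^d_+$. $\langle X,Y\rangle=\operatorname{Tr}(XY^\top)$; $\mathbb{S}^n$ is the set of symmetric $n\times n$ matrices. *)

(* Defs.v *)
From HB Require Import structures.
From mathcomp Require Import all_boot all_order all_algebra.
From mathcomp Require Import all_classical all_reals ereal.
Set Implicit Arguments. Unset Strict Implicit. Unset Printing Implicit Defensive.
Import Order.TTheory GRing.Theory Num.Theory.
Local Open Scope ring_scope.
Local Open Scope classical_set_scope.

Section Defs.
Variable R : realType.

Definition frob {m n : nat} (X Y : 'M[R]_(m, n)) : R := \tr (X *m Y^T).

Definition completely_positive {d : nat} (M : 'M[R]_d) : Prop :=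
  exists (k : nat) (h : 'I_k -> 'cV[R]_d),
    (forall i j, 0 <= h i j 0) /\ M = \sum_(i < k) (h i *m (h i)^T).

Definition quadf {n : nat} (A : 'M[R]_n) (a : 'cV[R]_n) (a0 : R) (x : 'cV[R]_n) : R :=
  (x^T *m A *m x) 0 0 + (a^T *m x) 0 0 + a0.

Definition feas {m n : nat} (C : 'M[R]_(m, n)) (d : 'cV[R]_m) : set 'cV[R]_n :=
  fun x : 'cV[R]_n => (forall i, 0 <= x i 0) /\ C *m x = d.

Definition frac_value {m n : nat} (A B : 'M[R]_n) (a b : 'cV[R]_n) (a0 b0 : R)
  (C : 'M[R]_(m, n)) (d : 'cV[R]_m) : \bar R :=
  ereal_inf [set ((quadf B b b0 x / quadf A a a0 x)%:E) | x in feas C d].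

Definition lift {n : nat} (rho : R) (y : 'cV[R]_n) (Y : 'M[R]_n) : 'M[R]_(1 + n) :=
  block_mx (rho%:M : 'M[R]_1) y^T y Y.

Definition cp_feas {m n : nat} (A : 'M[R]_n) (a : 'cV[R]_n) (a0 : R)
  (C : 'M[R]_(m, n)) (d : 'cV[R]_m) : set (R * 'cV[R]_n * 'M[R]_n) :=
  fun t : R * 'cV[R]_n * 'M[R]_n => let: (rho, y, Y) := t in
     completely_positive (lift rho y Y) /\
     frob A Y + frob a y + a0 * rho = 1 /\
     \tr (C *m Y *m C^T - C *m y *m d^T - d *m y^T *m C^T + rho *: (d *m d^T)) = 0.

Definition cp_value {m n : nat} (A B : 'M[R]_n) (a b : 'cV[R]_n) (a0 b0 : R)
  (C : 'M[R]_(m, n)) (d : 'cV[R]_m) : \bar R :=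
  ereal_inf [set ((let: (rho, y, Y) := t in b0 * rho + (b^T *m y) 0 0 + frob B Y)%:E)
            | t in cp_feas A a a0 C d].

End Defs.

(* Main.v *)
Require Import Defs.
From HB Require Import structures.
From mathcomp Require Import all_boot all_order all_algebra.
From mathcomp Require Import all_classical all_reals ereal.
From mathcomp Require Import ring lra.
Import Order.TTheory GRing.Theory Num.Theory.
Local Open Scope ring_scope.
Local Open Scope classical_set_scope.
Section H.
Variable R : realType.
Set Implicit Arguments.
Lemma mxtrace11 (M : 'M[R]_1) : \tr M = M 0 0.
Proof. by rewrite /mxtrace big_ord1. Qed.
Lemma frobE m n (X Y : 'M[R]_(m,n)) : frob X Y = \sum_i \sum_j X i j * Y i j.
Proof. rewrite /frob /mxtrace; apply: eq_bigr => i _; rewrite mxE; apply: eq_bigr => j _; by rewrite mxE. Qed.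
Lemma frob_sum m n K (X : 'M[R]_(m,n)) (M : 'I_K -> 'M[R]_(m,n)) :
  frob X (\sum_(k < K) M k) = \sum_k frob X (M k).
Proof.
rewrite frobE; under eq_bigr => i _ do under eq_bigr => j _ do rewrite summxE mulr_sumr.
under [RHS]eq_bigr => k _ do rewrite frobE.
rewrite [RHS]exchange_big /=; apply: eq_bigr => i _; by rewrite exchange_big.
Qed.
Lemma frobZ m n (X M : 'M[R]_(m,n)) c : frob X (c *: M) = c * frob X M.
Proof. rewrite !frobE mulr_sumr; apply: eq_bigr => i _; rewrite mulr_sumr; apply: eq_bigr => j _.
by rewrite mxE mulrCA. Qed.
Lemma frob_zz n (A : 'M[R]_n) (z : 'cV[R]_n) : frob A (z *m z^T) = (z^T *m A *m z) 0 0.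
Proof. by rewrite /frob trmx_mul trmxK mulmxA mxtrace_mulC mulmxA mxtrace11. Qed.
Lemma frob_a n (a z : 'cV[R]_n) : frob a z = (a^T *m z) 0 0.
Proof. rewrite frobE mxE; apply: eq_bigr => i _; by rewrite big_ord1 mxE. Qed.
Lemma hhT n (v : 'cV[R]_n) i j : (v *m v^T) i j = v i 0 * v j 0.
Proof. by rewrite mxE big_ord1 mxE. Qed.
Lemma cp_decomp n (rho : R) y Y K (h : 'I_K -> 'cV[R]_(1+n)) :
 Defs.lift rho y Y = \sum_k h k *m (h k)^T ->
 [/\ rho = \sum_k (h k (lshift n 0) 0) ^+ 2,
     y = \sum_k (h k (lshift n 0) 0) *: dsubmx (h k) &
     Y = \sum_k dsubmx (h k) *m (dsubmx (h k))^T].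
Proof.
move=> H; have E (i j : 'I_(1+n)) := congr1 (fun M : 'M[R]_(1+n) => M i j) H; simpl in E.
split.
- move: (E (lshift n 0) (lshift n 0)); rewrite /Defs.lift block_mxEul summxE mxE eqxx mulr1n => ->.
  by apply: eq_bigr => k _; rewrite hhT expr2.
- apply/matrixP => i j; rewrite (ord1 j); move: (E (rshift 1 i) (lshift n 0)).
  rewrite /Defs.lift block_mxEdl summxE => ->; rewrite summxE; apply: eq_bigr => k _.
  by rewrite hhT !mxE mulrC.
- apply/matrixP => i j; move: (E (rshift 1 i) (rshift 1 j)).
  rewrite /Defs.lift block_mxEdr summxE => ->; rewrite summxE; apply: eq_bigr => k _.
  by rewrite !hhT !mxE.
Qed.
Lemma trace_decomp m n K (C : 'M[R]_(m,n)) (d : 'cV[R]_m) (s : 'I_K -> R) (z : 'I_K -> 'cV[R]_n) :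
  \tr (C *m (\sum_k z k *m (z k)^T) *m C^T - C *m (\sum_k s k *: z k) *m d^T
     - d *m (\sum_k s k *: z k)^T *m C^T + (\sum_k s k ^+ 2) *: (d *m d^T))
  = \sum_k \sum_r ((C *m z k - s k *: d) r 0) ^+ 2.
Proof.
have -> : C *m (\sum_k z k *m (z k)^T) *m C^T - C *m (\sum_k s k *: z k) *m d^T
     - d *m (\sum_k s k *: z k)^T *m C^T + (\sum_k s k ^+ 2) *: (d *m d^T)
   = \sum_k (C *m z k - s k *: d) *m (C *m z k - s k *: d)^T.
  rewrite !mulmx_sumr !mulmx_suml (raddf_sum (@trmx _ _ _)) mulmx_sumr mulmx_suml scaler_suml.
  rewrite -!sumrB -big_split /=; apply: eq_bigr => k _.
  rewrite linearB /= !linearZ /= !trmx_mul. rewrite mulmxDl !mulmxDr.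
  rewrite -?scalemxAl -?scalemxAr ?mulmxN ?mulNmx ?scalerN ?opprK ?scalerA !mulmxA expr2.
  by rewrite !addrA.
rewrite linear_sum /=; apply: eq_bigr => k _.
rewrite /mxtrace; apply: eq_bigr => r _; by rewrite hhT expr2.
Qed.
Definition Gf {n} (A : 'M[R]_n) (a : 'cV[R]_n) (a0 : R) (z : 'cV[R]_n) (s : R) : R :=
  (z^T *m A *m z) 0 0 + s * (a^T *m z) 0 0 + a0 * s ^+ 2.
Lemma Gf_scale n (A : 'M[R]_n) a a0 z s : s != 0 ->
  quadf A a a0 (s^-1 *: z) * s ^+ 2 = Gf A a a0 z s.
Proof.
move=> s0; rewrite /quadf /Gf !linearZ /= -!scalemxAl !mxE.
by field.
Qed.
Lemma Gf_zero n (A : 'M[R]_n) a a0 : Gf A a a0 0 0 = 0.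
Proof. by rewrite /Gf !mulmx0 mxE mul0r expr2 !mulr0 !addr0. Qed.
Lemma Gf_sum n (A : 'M[R]_n) a a0 K (s : 'I_K -> R) (z : 'I_K -> 'cV[R]_n) :
  frob A (\sum_k z k *m (z k)^T) + frob a (\sum_k s k *: z k) + a0 * (\sum_k s k ^+ 2)
  = \sum_k Gf A a a0 (z k) (s k).
Proof.
rewrite !frob_sum mulr_sumr -!big_split /=; apply: eq_bigr => k _.
by rewrite frob_zz frobZ frob_a.
Qed.
Lemma recession m n (C : 'M[R]_(m,n)) d x0 M (z : 'cV[R]_n) :
 feas C d x0 -> (forall x, feas C d x -> forall i, `|x i 0| <= M) ->
 (forall i, 0 <= z i 0) -> C *m z = 0 -> z = 0.
Proof.
move=> [x0p Cx0] HM zp Cz; apply/matrixP => i j; rewrite (ord1 j) mxE.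
apply/eqP; rewrite eq_le zp andbT; rewrite leNgt; apply/negP => zi.
have M0 : 0 <= M by apply: le_trans (HM _ (conj x0p Cx0) i).
pose t := (M + 1) / z i 0.
have t0 : 0 <= t by apply: divr_ge0; [lra | exact: ltW].
have Fx : feas C d (x0 + t *: z).
  split; first by move=> l; rewrite !mxE; apply: addr_ge0 => //; apply: mulr_ge0.
  by rewrite mulmxDr -scalemxAr Cz scaler0 addr0.
have := HM _ Fx i; rewrite !mxE /t mulrAC -mulrA divff ?gt_eqF // mulr1.
have := x0p i; move=> h1 h2.
have := ler_norm (x0 i 0 + (M + 1)); lra.
Qed.
End H.

Theorem corollary3 (R : realType) (m n : nat)
  (A B : 'M[R]_n) (a b : 'cV[R]_n) (a0 b0 : R)
  (C : 'M[R]_(m, n)) (d : 'cV[R]_m) :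
  A^T = A -> B^T = B ->
  feas C d !=set0 ->
  (exists M : R, forall x, feas C d x -> forall i, `|x i 0| <= M) ->
  (forall x, feas C d x -> 0 < quadf A a a0 x) ->
  frac_value A B a b a0 b0 C d = cp_value A B a b a0 b0 C d.
Proof.
move=> _ _ [x0 Fx0] [M HM] Hq.
apply/eqP; rewrite eq_le; apply/andP; split.
- apply/ereal_infP => _ [[[rho y] Y] [Hcp [Hn Ht]] <-].
  case: Hcp => K [h [hp Hl]].
  pose s := fun k => h k (lshift n 0) 0.
  pose z := fun k => dsubmx (h k).
  have [Er Ey EY] : [/\ rho = \sum_k s k ^+ 2, y = \sum_k s k *: z k & Y = \sum_k z k *m (z k)^T]
    := cp_decomp h Hl.
  rewrite Er Ey EY in Hn Ht *.
  rewrite trace_decomp in Ht.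
  have sp k : 0 <= s k by apply: hp.
  have zp k i : 0 <= z k i 0 by rewrite /z mxE; apply: hp.
  have Cz k : C *m z k = s k *: d.
    have H1 : \sum_r ((C *m z k - s k *: d) r 0) ^+ 2 = 0.
      apply: (psumr_eq0P _ Ht) => // l _; apply: sumr_ge0 => r _; exact: sqr_ge0.
    apply/matrixP => i j; rewrite (ord1 j); apply/eqP; rewrite -subr_eq0.
    have := psumr_eq0P (fun r _ => sqr_ge0 _) H1 (i:=i) isT.
    by move/eqP; rewrite sqrf_eq0 !mxE.
  rewrite Gf_sum in Hn.
  have -> : b0 * \sum_k s k ^+ 2 + (b^T *m (\sum_k s k *: z k)) 0 0 + frob B (\sum_k z k *m (z k)^T)
      = \sum_k Gf R B b b0 (z k) (s k).
    by rewrite -frob_a -Gf_sum; ring.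
  set obj := \sum_k Gf R B b b0 (z k) (s k).
  pose xk k := (s k)^-1 *: z k.
  have z0 k : s k = 0 -> z k = 0.
    move=> sk; apply: (recession M Fx0 HM (zp k)); by rewrite Cz sk scale0r.
  have Fk k : 0 < s k -> feas C d (xk k).
    move=> sk; split; first by move=> i; rewrite mxE; apply: mulr_ge0; [rewrite invr_ge0 ltW|].
    by rewrite -scalemxAr Cz scalerA mulVf ?gt_eqF // scale1r.
  have G0 (A' : 'M[R]_n) a' a0' k : s k = 0 -> Gf R A' a' a0' (z k) (s k) = 0.
    by move=> sk; rewrite (z0 k sk) sk Gf_zero.
  have GS (A' : 'M[R]_n) a' a0' k : 0 < s k ->
      Gf R A' a' a0' (z k) (s k) = quadf A' a' a0' (xk k) * s k ^+ 2.
    by move=> sk; rewrite Gf_scale ?gt_eqF.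
  apply: ge_ereal_inf.
  case: (boolP [exists k, (0 < s k) && (quadf B b b0 (xk k) / quadf A a a0 (xk k) <= obj)]).
    move/existsP => [k /andP [sk rk]]; exists (quadf B b b0 (xk k) / quadf A a a0 (xk k))%:E.
      by exists (xk k) => //; apply: Fk.
    by rewrite lee_fin.
  move/existsPn => Hno; exfalso.
  have [k0 sk0] : exists k, 0 < s k.
    case: (boolP [exists k, 0 < s k]) => [/existsP // | /existsPn Hs].
    move: Hn; rewrite big1 => [|k _]; first by move/eqP; rewrite eq_sym oner_eq0.
    apply: G0; apply/eqP; rewrite eq_le sp andbT; move: (Hs k); by rewrite ltNge negbK.
  have key k : Gf R A a a0 (z k) (s k) * obj <= Gf R B b b0 (z k) (s k) /\
      (0 < s k -> Gf R A a a0 (z k) (s k) * obj < Gf R B b b0 (z k) (s k)).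
    have hstr : 0 < s k -> Gf R A a a0 (z k) (s k) * obj < Gf R B b b0 (z k) (s k).
      move=> sk; rewrite !GS //.
      have q0 := Hq _ (Fk k sk).
      have rk : obj < quadf B b b0 (xk k) / quadf A a a0 (xk k).
        by move: (Hno k); rewrite sk /= -ltNge.
      have h1 : quadf A a a0 (xk k) * obj < quadf B b b0 (xk k).
        by move: rk; rewrite ltr_pdivlMr // mulrC.
      have s2 : 0 < s k ^+ 2 by apply: exprn_gt0.
      rewrite -subr_gt0.
      have -> : quadf B b b0 (xk k) * s k ^+ 2 - quadf A a a0 (xk k) * s k ^+ 2 * obj
        = (quadf B b b0 (xk k) - quadf A a a0 (xk k) * obj) * s k ^+ 2 by ring.
      by apply: mulr_gt0; rewrite ?subr_gt0.
    split=> //.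
    have [sk|sk] := boolP (0 < s k); first exact/ltW/hstr.
    have sk0' : s k = 0 by apply/eqP; rewrite eq_le sp andbT leNgt.
    by rewrite !G0 // mul0r.
  have : \sum_k Gf R A a a0 (z k) (s k) * obj < obj.
    rewrite /obj (bigD1 k0) //= [X in _ < X](bigD1 k0) //=.
    apply: ltr_leD; first exact: (key k0).2.
    by apply: ler_sum => k _; exact: (key k).1.
  by rewrite -mulr_suml Hn mul1r ltxx.
- apply/ereal_infP => _ [x Fx <-].
  apply: ge_ereal_inf.
  have q0 := Hq x Fx.
  pose rho := (quadf A a a0 x)^-1.
  exists ((b0 * rho + (b^T *m (rho *: x)) 0 0 + frob B (rho *: (x *m x^T)))%:E).
    exists (rho, rho *: x, rho *: (x *m x^T)) => //.
    have rho0 : 0 <= rho by rewrite /rho invr_ge0 ltW.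
    have Hr : rho * quadf A a a0 x = 1 by rewrite mulVf ?gt_eqF.
    split; last split.
    + exists 1%N, (fun _ => Num.sqrt rho *: col_mx 1%:M x); split.
        move=> _ j; rewrite !mxE; apply: mulr_ge0; first exact: sqrtr_ge0.
        case: splitP => l _; last by case: Fx => + _; apply.
        by rewrite (ord1 l) mxE.
      rewrite big_ord1 linearZ /= -scalemxAl -scalemxAr scalerA -expr2 sqr_sqrtr //.
      rewrite tr_col_mx mul_col_row trmx1 mul1mx mulmx1 scale_block_mx /Defs.lift.
      by rewrite mul1mx linearZ /= scalemx1.
    + rewrite frobZ frob_zz frob_a -scalemxAr [X in _ + X + _ = _]mxE -Hr /quadf; ring.
    + case: Fx => _ <-.
      rewrite !linearZ /= !trmx_mul -!scalemxAl !mulmxA subrr sub0r addNr mxtrace0 //.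
  rewrite lee_fin frobZ frob_zz -scalemxAr [X in _ + X + _ <= _]mxE /rho.
  rewrite [quadf B _ _ _]/quadf le_eqVlt; apply/orP; left; apply/eqP; ring.
Qed.
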